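(* Let $n\geq 4$ and let $X_n$ be the rack of transpositions of $\mathbb{S}_n$. Let $-1$ denote the constant rack $2$-cocycle on $X_n$ with value $-1$, and let $\chi:X_n\times X_n\to\mathbb{C}^\times$ be given, for $\sigma\in X_n$ and $\tau=(i\;j)\in X_n$ with $i<j$, by $\chi(\sigma,\tau)=1$ if $\sigma(i)<\sigma(j)$ and $\chi(\sigma,\tau)=-1$ if $\sigma(i)>\sigma(j)$. Then the rack $2$-cocycles $\chi$ and $-1$ on $X_n$ are equivalent by twist. Consequently, the Nichols algebras $\mathfrak{B}(X_n,-1)$ and $\mathfrak{B}(X_n,\chi)$ have the same Hilbert series.
   Context: A rack is a non-empty set $X$ with a map $\triangleright:X\times X\to X$ such that $y\mapsto x\triangleright y$ is bijective for all $x$ and $x\triangleright(y\triangleright z)=(x\triangleright y)\triangleright(x\triangleright z)$. $X_n$ is the set of transpositions in $\mathbb{S}_n$ with $x\triangleright y=xyx^{-1}$. A rack $2$-cocycle is a map $q:X\times X\to\mathbb{C}^\times$ with $q_{x,y\triangleright z}q_{y,z}=q_{x\triangleright y,x\triangleright z}q_{x,z}$ for all $x,y,z$. For a map $\phi:X\times X\to\mathbb{C}^\times$ define $q^\phi_{x,y}=\phi(x,y)\phi(x\triangleright y,x)^{-1}q_{x,y}$. Two rack $2$-cocycles $q,q'$ on $X$ are equivalent by twist if there exists $\phi:X\times X\to\mathbb{C}^\times$ with $q'=q^\phi$. Given a rack $2$-cocycle $q$ on a finite rack $X$, let $V=\mathbb{C}X$ with basis $X$ and braiding $c(x\otimes y)=q_{x,y}\,(x\triangleright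 y)\otimes x$; this induces a representation $\rho_m$ of the braid group $\mathbb{B}_m$ on $V^{\otimes m}$ with $\rho_m(\sigma_i)=\mathrm{id}^{\otimes(i-1)}\otimes c\otimes\mathrm{id}^{\otimes(m-i-1)}$. Let $\mu:\mathbb{S}_m\to\mathbb{B}_m$ be the Matsumoto section ($\mu((i\;i+1))=\sigma_i$, $\mu(xy)=\mu(x)\mu(y)$ when lengths add), and $Q_m=\sum_{\sigma\in\mathbb{S}_m}\rho_m(\mu(\sigma))$ for $m\ge2$. The Nichols algebra is $\mathfrak{B}(X,q)=T(V)/\bigoplus_{m\ge2}\ker Q_m$, graded by tensor degree; its Hilbert series is $\sum_{m\ge0}\dim\mathfrak{B}^m(X,q)\,t^m$. *)

(* Defs.v *)
From HB Require Import structures.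
From mathcomp Require Import all_boot all_order all_algebra all_fingroup.
Set Implicit Arguments. Unset Strict Implicit. Unset Printing Implicit Defensive.
Import GRing.Theory Num.Theory.
Local Open Scope ring_scope.

Section Rack.
Variables (C : fieldType) (X : finType) (rk : X -> X -> X).

Definition is_cocycle (q : X -> X -> C) : Prop :=
  (forall x y, q x y != 0) /\
  (forall x y z, q x (rk y z) * q y z = q (rk x y) (rk x z) * q x z).

Definition twist (q phi : X -> X -> C) (x y : X) : C :=
  phi x y * (phi (rk x y) x)^-1 * q x y.

Definition twist_equiv (q q' : X -> X -> C) : Prop :=
  exists phi : X -> X -> C, (forall x y, phi x y != 0) /\
    (forall x y, q' x y = twist q phi x y).

(* basis of V^{(x)m}: words w : 'I_m -> X; linear maps are encoded by
   matrices in row convention: A i j = coefficient of basis vector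
   (enum_val j) in the image of basis vector (enum_val i); so v |-> v *m A. *)
Definition tens_dim (m : nat) := #|{ffun 'I_m -> X}|.

Definition braid_at (m : nat) (a b : 'I_m) (w : {ffun 'I_m -> X}) : {ffun 'I_m -> X} :=
  [ffun p => if p == a then rk (w a) (w b) else if p == b then w a else w p].

(* rho_m(sigma_{k+1}) : acts on tensor positions k, k+1 (0-based) by c *)
Definition rho_gen (q : X -> X -> C) (m k : nat) : 'M[C]_(tens_dim m) :=
  match @insub _ (fun i => i < m)%N _ k, @insub _ (fun i => i < m)%N _ k.+1 with
  | Some a, Some b =>
      \matrix_(i, j) (let w := enum_val i in
                      if enum_val j == braid_at a b w then q (w a) (w b) else 0)
  | _, _ => 1
  end.

Definition rho_word (q : X -> X -> C) (m : nat) (w : seq nat) : 'M[C]_(tens_dim m) :=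
  foldr (fun k M => M *m rho_gen q m k) 1%:M w.

End Rack.

(* simple transposition (k k+1) in S_m (0-based); identity if out of range *)
Definition sadj (m k : nat) : 'S_m :=
  match @insub _ (fun i => i < m)%N 'I_m k, @insub _ (fun i => i < m)%N 'I_m k.+1 with
  | Some a, Some b => tperm a b
  | _, _ => 1%g
  end.

Definition word_perm (m : nat) (w : seq nat) : 'S_m := (\prod_(k <- w) sadj m k)%g.

(* Coxeter length = number of inversions *)
Definition ninv (m : nat) (s : 'S_m) : nat :=
  #|[set p : 'I_m * 'I_m | (p.1 < p.2)%N && (s p.2 < s p.1)%N]|.

Definition red_word (m : nat) (s : 'S_m) : seq nat :=
  match [pick t : (ninv s).-tuple 'I_m |
           all (fun k => k.+1 < m)%N (map val t) && (word_perm m (map val t) == s)] with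
  | Some t => map val t
  | None => [::]
  end.

Section Nichols.
Variables (C : fieldType) (X : finType) (rk : X -> X -> X).

(* Q_m = sum_{s in S_m} rho_m(mu(s)), mu = Matsumoto section *)
Definition Qm (q : X -> X -> C) (m : nat) : 'M[C]_(tens_dim X m) :=
  \sum_(s : 'S_m) rho_word rk q m (red_word s).

(* dim B^m(X,q) = dim T^m(V) - dim ker Q_m  (nothing quotiented for m < 2) *)
Definition nichols_dim (q : X -> X -> C) (m : nat) : nat :=
  (tens_dim X m - (if (2 <= m)%N then \rank (kermx (Qm q m)) else 0))%N.
End Nichols.

Definition is_transp (n : nat) (s : 'S_n) : bool :=
  [exists i : 'I_n, exists j : 'I_n, (i != j) && (s == tperm i j)].

Definition Xn (n : nat) := {s : 'S_n | is_transp s}.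

Lemma is_transp_conj (n : nat) (x y : 'S_n) :
  is_transp y -> is_transp (x * y * x^-1)%g.
Proof.
rewrite /is_transp => /existsP [i /existsP [j /andP [nij /eqP ->]]].
have -> : (x * tperm i j * x^-1 = tperm i j ^ x^-1)%g by rewrite conjgE invgK mulgA.
rewrite tpermJ.
apply/existsP; exists ((x^-1)%g i); apply/existsP; exists ((x^-1)%g j).
by rewrite (inj_eq perm_inj) nij eqxx.
Qed.

Definition rk_Xn (n : nat) (x y : Xn n) : Xn n :=
  exist _ (val x * val y * (val x)^-1)%g (is_transp_conj (val x) (valP y)).

Definition minus_one (C : fieldType) (n : nat) : Xn n -> Xn n -> C := fun _ _ => -1.

Definition chi (C : fieldType) (n : nat) (sigma tau : Xn n) : C :=
  if [exists i : 'I_n, exists j : 'I_n,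
        [&& (i < j)%N, val tau == tperm i j & (val sigma j < val sigma i)%N]]
  then -1 else 1.

(* Main.v *)
Require Import Defs.
From mathcomp Require Import all_boot all_order all_algebra all_fingroup.
Set Implicit Arguments. Unset Strict Implicit. Unset Printing Implicit Defensive.
From mathcomp Require Import ring.
Import GRing.Theory Num.Theory.
Local Open Scope ring_scope.

Section Clifford.
Variables (C : numClosedFieldType) (n : nat).

Lemma Xn_ex (x : Xn n) : exists i j : 'I_n, (i < j)%N /\ val x = tperm i j.
Proof.
have := valP x; rewrite /is_transp => /existsP [i /existsP [j /andP [nij /eqP E]]].
case: (ltngtP i j) => [lt|gt|eq].
- by exists i, j.
- by exists j, i; rewrite tpermC.
- by move/eqP: nij; case; apply: val_inj.
Qed.

Lemma tperm_lt_inj (i j i' j' : 'I_n) :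
  (i < j)%N -> (i' < j')%N -> tperm i j = tperm i' j' -> i = i' /\ j = j'.
Proof.
move=> lt lt' E.
have hi : (i == i') || (i == j').
  apply/negPn/negP; rewrite negb_or => /andP [a b].
  have : tperm i' j' i = i by rewrite tpermD // eq_sym.
  rewrite -E tpermL => /eqP; rewrite -(inj_eq val_inj) /= => /eqP h.
  by move: lt; rewrite h ltnn.
have hj : (j == i') || (j == j').
  apply/negPn/negP; rewrite negb_or => /andP [a b].
  have : tperm i' j' j = j by rewrite tpermD // eq_sym.
  rewrite -E tpermR => /eqP; rewrite -(inj_eq val_inj) /= => /eqP h.
  by move: lt; rewrite h ltnn.
case/orP: hi => /eqP hi; case/orP: hj => /eqP hj; subst.
- by move: lt; rewrite ltnn.
- by [].
- by move: (ltn_trans lt lt'); rewrite ltnn.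
- by move: lt; rewrite ltnn.
Qed.

Lemma chi_tperm (sigma tau : Xn n) (i j : 'I_n) :
  (i < j)%N -> val tau = tperm i j ->
  chi C sigma tau = if (val sigma j < val sigma i)%N then -1 else 1.
Proof.
move=> lt E; rewrite /chi; case: existsP => [[i' /existsP [j' /and3P [lt' /eqP e s]]]|nex].
- rewrite E in e; have [-> ->] := tperm_lt_inj lt lt' e.
  by rewrite s.
- case: ifP => // s; exfalso; apply: nex; exists i; apply/existsP; exists j.
  by rewrite lt E eqxx s.
Qed.

Definition tog (k : 'I_n) (S : {set 'I_n}) : {set 'I_n} := [set s | (s == k) (+) (s \in S)].

Lemma togK k S : tog k (tog k S) = S.
Proof. by apply/setP => s; rewrite !inE addbA addbb. Qed.

Lemma togC i k S : tog i (tog k S) = tog k (tog i S).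
Proof. by apply/setP => s; rewrite !inE addbCA. Qed.

Lemma odd_card_tog (i : 'I_n) (A : {set 'I_n}) :
  odd #|[set s | (s == i) (+) (s \in A)]| = ~~ odd #|A|.
Proof.
case iA: (i \in A).
- have -> : [set s | (s == i) (+) (s \in A)] = A :\ i.
    by apply/setP => s; rewrite !inE; case: eqP => [->|]; rewrite ?iA.
  by rewrite (cardsD1 i A) iA /= negbK.
- have -> : [set s | (s == i) (+) (s \in A)] = i |: A.
    by apply/setP => s; rewrite !inE; case: eqP => [->|]; rewrite ?iA.
  by rewrite cardsU1 iA.
Qed.

Definition eps (k : 'I_n) (S : {set 'I_n}) : C :=
  (-1) ^+ odd #|[set s | (s \in S) && (s < k)%N]|.

Lemma eps_tog i k S : i != k ->
  eps k (tog i S) = (if (i < k)%N then -1 else 1) * eps k S.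
Proof.
move=> ik; rewrite /eps; case: ifP => lt.
- have -> : [set s | (s \in tog i S) && (s < k)%N] =
            [set s | (s == i) (+) (s \in [set s | (s \in S) && (s < k)%N])].
    apply/setP => s; rewrite !inE; case: eqP => [->|]; by rewrite ?lt ?andbT.
  rewrite odd_card_tog; case: (odd _); by rewrite /= ?expr0 ?expr1 ?mulrNN ?mulr1 ?mulN1r ?opprK.
- rewrite mul1r; suff -> : [set s | (s \in tog i S) && (s < k)%N] =
            [set s | (s \in S) && (s < k)%N] by [].
  apply/setP => s; rewrite !inE.
  by case: eqP => [->|_]; rewrite ?lt ?andbF.
Qed.

Lemma eps_togK k S : eps k (tog k S) = eps k S.
Proof.
rewrite /eps; suff -> : [set s | (s \in tog k S) && (s < k)%N] =
            [set s | (s \in S) && (s < k)%N] by [].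
apply/setP => s; rewrite !inE.
by case: eqP => [->|_]; rewrite ?ltnn ?andbF.
Qed.


Definition NS := #|{set 'I_n}|.
Definition mono (f : {set 'I_n} -> {set 'I_n}) (g : {set 'I_n} -> C) : 'M[C]_NS :=
  \matrix_(a, b) (if enum_val b == f (enum_val a) then g (enum_val a) else 0).

Lemma mono_mul f g f' g' :
  mono f g * mono f' g' = mono (fun S => f' (f S)) (fun S => g S * g' (f S)).
Proof.
rewrite -mulmxE; apply/matrixP => a c; rewrite !mxE.
rewrite (bigD1 (enum_rank (f (enum_val a)))) //= big1 ?addr0.
- rewrite !mxE enum_rankK eqxx.
  by case: eqP => _; rewrite ?mulr0.
- move=> b nb; rewrite !mxE; case: eqP => [E|_]; last by rewrite mul0r.
  by move: nb; rewrite -E enum_valK eqxx.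
Qed.

Lemma eq_mono f g f' g' : (forall S, f S = f' S) -> (forall S, g S = g' S) ->
  mono f g = mono f' g'.
Proof. by move=> ef eg; apply/matrixP => a b; rewrite !mxE ef eg. Qed.

Lemma mono1 : mono id (fun _ => 1) = 1.
Proof.
apply/matrixP => a b; rewrite !mxE (inj_eq enum_val_inj) eq_sym.
by case: eqP.
Qed.

Lemma monoN f g : - mono f g = mono f (fun S => - g S).
Proof. by apply/matrixP => a b; rewrite !mxE; case: eqP; rewrite ?oppr0. Qed.

Definition Emx (k : 'I_n) := mono (tog k) (eps k).

Lemma EmxK k : Emx k * Emx k = 1.
Proof.
rewrite mono_mul -mono1; apply: eq_mono => S; first by rewrite togK.
rewrite eps_togK /eps -expr2 -exprM mulnC exprM sqrrN expr1n.
by rewrite expr1n.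
Qed.

Lemma Emx_anti i k : i != k -> Emx i * Emx k = - (Emx k * Emx i).
Proof.
move=> ik; rewrite !mono_mul monoN; apply: eq_mono => S; first by rewrite togC.
have ki : k != i by rewrite eq_sym.
rewrite (eps_tog _ ik) (eps_tog _ ki).
case: (ltngtP i k) => h.
- by rewrite mulN1r mul1r mulrN mulrC.
- by rewrite mulN1r mul1r mulrN opprK mulrC.
- by move: ik; rewrite (val_inj h) eqxx.
Qed.

Lemma Emx3 a b : a != b -> Emx a * Emx b * Emx a = - Emx b.
Proof. by move=> ab; rewrite (Emx_anti ab) mulNr -mulrA EmxK mulr1. Qed.

Lemma expand3 (A B M : 'M[C]_NS) :
  (A - B) * M * (A - B) = (A * M * A - A * M * B) - (B * M * A - B * M * B).
Proof. by rewrite !mulrBl !mulrBr. Qed.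

Lemma uEu (i j k : 'I_n) : i != j ->
  (Emx i - Emx j) * Emx k * (Emx i - Emx j) = - (Emx (tperm i j k) + Emx (tperm i j k)).
Proof.
move=> ij; have ji : j != i by rewrite eq_sym.
rewrite expand3.
case: (tpermP i j k) => [->|->|].

- rewrite EmxK mul1r -mulrA EmxK mulr1 (Emx3 ji) mul1r opprK.
  move: (Emx i) (Emx j) => a b.
  by rewrite opprD (addrC (-b)) addrACA subrr add0r opprD.
- rewrite (Emx3 ij) EmxK mul1r -mulrA EmxK mulr1.
  move: (Emx i) (Emx j) => a b.
  by rewrite opprB mul1r addrACA addNr add0r opprD.
- move=> ki kj.
  have ik : i != k by apply/eqP => h; apply: ki; rewrite h.
  have jk : j != k by apply/eqP => h; apply: kj; rewrite h.
  rewrite (Emx3 ik) (Emx3 jk).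
  rewrite (Emx_anti ik) mulNr (Emx_anti jk) mulNr.
  rewrite -(mulrA (Emx k) (Emx j)) (Emx_anti ji) mulrN mulrA.
  move: (Emx k) (Emx k * Emx i * Emx j) => c y.
  by rewrite !opprK opprD addrA addrK opprD.
Qed.

Lemma uu2 (i j : 'I_n) : i != j -> (Emx i - Emx j) * (Emx i - Emx j) = 1 + 1.
Proof.
move=> ij; rewrite mulrBl !mulrBr !EmxK (Emx_anti ij).
move: (Emx j * Emx i) => y.
by rewrite opprK opprB addrACA subrr addr0.
Qed.


Definition u (x : Xn n) : 'M[C]_NS :=
  if [pick p : 'I_n * 'I_n | (p.1 < p.2)%N && (val x == tperm p.1 p.2)] is Some p
  then Emx p.1 - Emx p.2 else 0.

Lemma u_tperm (x : Xn n) (i j : 'I_n) : (i < j)%N -> val x = tperm i j ->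
  u x = Emx i - Emx j.
Proof.
move=> lt E; rewrite /u; case: pickP => [p /andP [lt' /eqP e]|none].
- by rewrite E in e; have [<- <-] := tperm_lt_inj lt lt' e.
- by move: (none (i, j)); rewrite /= lt E eqxx.
Qed.

Lemma rk_tperm (x y : Xn n) (i j a b : 'I_n) :
  val x = tperm i j -> val y = tperm a b ->
  val (rk_Xn x y) = tperm (tperm i j a) (tperm i j b).
Proof.
move=> Ex Ey; rewrite /= Ex Ey tpermV -tpermJ conjgE tpermV.
by rewrite mulgA.
Qed.

Lemma chi_sq (x y : Xn n) : chi C x y * chi C x y = 1.
Proof. by rewrite /chi; case: ifP => _; rewrite ?mulrNN mulr1. Qed.

Lemma cancel2 (P R : 'M[C]_NS) : P + P = R + R -> P = R.
Proof.
have h2 : (1 + 1 : C) != 0 by rewrite -mulr2n mulrn_eq0 oner_eq0.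
have E (Q : 'M[C]_NS) : Q = (1 + 1)^-1 *: (Q + Q).
  by rewrite -{2 3}[Q]scale1r -scalerDl scalerA mulVf // scale1r.
by move=> e; rewrite (E P) e -E.
Qed.

Lemma u_braid (x y : Xn n) :
  u x * u y = (- chi C x y)%:M * (u (rk_Xn x y) * u x).
Proof.
have [i [j [lt Ex]]] := Xn_ex x.
have [a [b [ltab Ey]]] := Xn_ex y.
have ij : i != j by rewrite neq_ltn lt.
have ab : a != b by rewrite neq_ltn ltab.
have Ez := rk_tperm Ex Ey.
rewrite (chi_tperm x ltab Ey) Ex (u_tperm lt Ex) (u_tperm ltab Ey).
set U := Emx i - Emx j.
have T : U * (Emx a - Emx b) * U =
   - (Emx (tperm i j a) + Emx (tperm i j a)) + (Emx (tperm i j b) + Emx (tperm i j b)).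
  by rewrite /U [(_ - _) * (Emx a - Emx b)]mulrBr mulrBl !uEu // opprK.
have UU : U * U = 1 + 1 by rewrite /U uu2.
set P := U * (Emx a - Emx b).
have PP : P * U * U = P + P by rewrite -mulrA UU mulrDr mulr1.
case: (ltngtP (tperm i j a) (tperm i j b)) => h.
- rewrite (u_tperm h Ez).
  apply: cancel2; rewrite -PP T.
  move: (Emx (tperm i j a)) (Emx (tperm i j b)) => A B.
  rewrite raddfN /= mulN1r mulrBl opprB !mulrDl mulNr mulrDl.
  move: (A * U) (B * U) => a' b'.
  by rewrite opprD addrC addrACA.
- rewrite tpermC in Ez; rewrite (u_tperm h Ez).
  apply: cancel2; rewrite -PP T.
  move: (Emx (tperm i j a)) (Emx (tperm i j b)) => A B.
  rewrite opprK mul1r mulrBl !mulrDl mulNr mulrDl.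
  move: (A * U) (B * U) => a' b'.
  by rewrite opprD addrC addrACA.
- by move/val_inj/perm_inj/eqP: h; rewrite (negbTE ab).
Qed.


Definition Wl (l : seq (Xn n)) : 'M[C]_NS := foldr (fun x M => u x * M) 1 l.

Lemma Wl_cat l1 l2 : Wl (l1 ++ l2) = Wl l1 * Wl l2.
Proof. by elim: l1 => [|x l IH] /=; rewrite ?mul1r // IH mulrA. Qed.

Definition DM (M : 'M[C]_NS) : C :=
  if [pick p : 'I_NS * 'I_NS | M p.1 p.2 != 0] is Some p then M p.1 p.2 else 1.

Lemma DM_neq0 M : DM M != 0.
Proof. by rewrite /DM; case: pickP => [p //|_]; rewrite oner_eq0. Qed.

Lemma DM_scale c M : c != 0 -> M != 0 -> DM (c%:M * M) = c * DM M.
Proof.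
move=> c0 M0.
have E p q : (c%:M * M) p q = c * M p q by rewrite -mulmxE mul_scalar_mx mxE.
rewrite /DM (@eq_pick _ _ (fun p => M p.1 p.2 != 0)) => [|p]; last first.
  by rewrite /= E mulf_eq0 negb_or c0.
case: pickP => [p _|none]; first by rewrite E.
case/eqP: M0; apply/matrixP => p q; rewrite mxE.
by move: (none (p, q)) => /= /eqP.
Qed.

Lemma scalarC (a : C) (A : 'M[C]_NS) : A * a%:M = a%:M * A.
Proof. by rewrite -!mulmxE scalar_mxC. Qed.

Lemma scalarM (a b : C) : a%:M * b%:M = (a * b)%:M :> 'M[C]_NS.
Proof. by rewrite -mulmxE -scalar_mxM. Qed.

Lemma u_sq (x : Xn n) : u x * u x = 1 + 1.
Proof.
have [i [j [lt Ex]]] := Xn_ex x.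
by rewrite (u_tperm lt Ex) uu2 // neq_ltn lt.
Qed.

Lemma Wl_rev l : Wl l * Wl (rev l) = ((1 + 1) ^+ size l)%:M.
Proof.
elim: l => [|x l IH] /=; first by rewrite mulr1.
rewrite rev_cons -cats1 Wl_cat /= mulr1 -!mulrA (mulrA (Wl l)) IH.
rewrite mulrA scalarC -mulrA u_sq exprSr scalar_mxM.
by rewrite raddfD.
Qed.

Lemma Wl_neq0 l : Wl l != 0.
Proof.
apply/eqP => W0; have := Wl_rev l; rewrite W0 mul0r => /matrixP /(_ (enum_rank set0) (enum_rank set0)).
rewrite !mxE eqxx /= => /esym /eqP; rewrite mulr1n expf_eq0.
by rewrite -mulr2n mulrn_eq0 oner_eq0 andbF.
Qed.


Definition Dl (l : seq (Xn n)) : C := DM (Wl l).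

Lemma Dl_braid l1 l2 (x y : Xn n) :
  Dl (l1 ++ [:: rk_Xn x y; x] ++ l2) = - chi C x y * Dl (l1 ++ [:: x; y] ++ l2).
Proof.
rewrite /Dl !Wl_cat /= !mulr1.
have c0 : - chi C x y != 0 by rewrite oppr_eq0 /chi; case: ifP; rewrite ?oppr_eq0 oner_eq0.
have -> : u (rk_Xn x y) * u x = (- chi C x y)%:M * (u x * u y).
  rewrite [u x * u y]u_braid mulrA scalarM mulrNN chi_sq.
  by rewrite mul1r.
rewrite -DM_scale //.
  f_equal; by rewrite !mulrA scalarC.
by have := Wl_neq0 (l1 ++ [:: x; y] ++ l2); rewrite !Wl_cat /= mulr1.
Qed.


Lemma rk_sd (x y z : Xn n) :
  rk_Xn (rk_Xn x y) (rk_Xn x z) = rk_Xn x (rk_Xn y z).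
Proof.
apply: val_inj => /=; rewrite !invMg !invgK !mulgA.
by rewrite !mulgKV.
Qed.

Lemma chi_neq0 (x y : Xn n) : chi C x y != 0.
Proof. by rewrite /chi; case: ifP; rewrite ?oppr_eq0 oner_eq0. Qed.

Lemma chi_cocycle (x y z : Xn n) :
  chi C x (rk_Xn y z) * chi C y z = chi C (rk_Xn x y) (rk_Xn x z) * chi C x z.
Proof.
have e1 := Dl_braid [::] [:: z] x y.
have e2 := Dl_braid [:: rk_Xn x y] [::] x z.
have e3 := Dl_braid [::] [:: x] (rk_Xn x y) (rk_Xn x z).
have f1 := Dl_braid [::] [::] y z.
have f1' : Dl [:: x; rk_Xn y z; y] = - chi C y z * Dl [:: x; y; z].
  have := Dl_braid [:: x] [::] y z; by [].
have f2 := Dl_braid [::] [:: y] x (rk_Xn y z).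
have f3 := Dl_braid [::] [::] x y.
have f3' : Dl [:: rk_Xn x (rk_Xn y z); rk_Xn x y; x] =
           - chi C x y * Dl [:: rk_Xn x (rk_Xn y z); x; y].
  have := Dl_braid [:: rk_Xn x (rk_Xn y z)] [::] x y; by [].
rewrite /= in e1 e2 e3 f2.
rewrite rk_sd in e3.
have E : - chi C (rk_Xn x y) (rk_Xn x z) * (- chi C x z * (- chi C x y)) * Dl [:: x; y; z] =
         - chi C x y * (- chi C x (rk_Xn y z) * (- chi C y z)) * Dl [:: x; y; z].
  by rewrite -!mulrA -e1 -e2 -e3 -f1' -f2 -f3'.
have K := mulIf (DM_neq0 _) E.
move: K; set a := chi C x y; set b := chi C x z; set d := chi C (rk_Xn x y) (rk_Xn x z).
set e := chi C x (rk_Xn y z); set f := chi C y z => K.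
have K2 : a * (e * f - d * b) = 0.
  have -> : a * (e * f - d * b) =
    (- d * (- b * - a)) - (- a * (- e * - f)) by ring.
  by rewrite K subrr.
move/eqP: K2; rewrite mulf_eq0 (negbTE (chi_neq0 x y)) /= subr_eq0 => /eqP.
by [].
Qed.

End Clifford.


Section Words.
Variables (C : numClosedFieldType) (n m : nat).

Definition Dw (w : {ffun 'I_m -> Xn n}) : C := Dl C [seq w i | i <- enum 'I_m].

Lemma mem_take_ord k (p : 'I_m) : p \in take k (enum 'I_m) -> (p < k)%N.
Proof.
move/(map_f val); rewrite map_take val_enum_ord take_iota mem_iota /=.
by rewrite leq_min => /andP [].
Qed.

Lemma mem_drop_ord k (p : 'I_m) : p \in drop k (enum 'I_m) -> (k <= p)%N.
Proof.
move/(map_f val); rewrite map_drop val_enum_ord drop_iota mem_iota /=.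
by case/andP.
Qed.

Lemma Dw_braid (w : {ffun 'I_m -> Xn n}) (a b : 'I_m) :
  val b = (val a).+1 ->
  Dw (braid_at (@rk_Xn n) a b w) = - chi C (w a) (w b) * Dw w.
Proof.
move=> Eb; set k := val a.
have ab : (a == b) = false by apply/negbTE; rewrite -(inj_eq val_inj) Eb neq_ltn ltnSn.
set E := enum 'I_m.
have sz : size E = m by rewrite size_enum_ord.
have hE : E = take k E ++ [:: a; b] ++ drop k.+2 E.
  rewrite -{1}(cat_take_drop k E); congr (_ ++ _).
  have kb : (k.+1 < size E)%N by rewrite sz /k -Eb ltn_ord.
  rewrite (drop_nth a) ?sz ?ltn_ord // (drop_nth a kb).
  by rewrite /E /k nth_ord_enum -Eb nth_ord_enum.
rewrite /Dw -/E hE !map_cat /= !ffunE eqxx eq_sym ab eqxx.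
rewrite -Dl_braid; congr (Dl C (_ ++ _ :: _ :: _)).
- apply/eq_in_map => p /mem_take_ord lt; rewrite ffunE.
  have -> : (p == a) = false by apply/negbTE; rewrite -(inj_eq val_inj) neq_ltn lt.
  have -> // : (p == b) = false.
  by apply/negbTE; rewrite -(inj_eq val_inj) neq_ltn Eb ltnS ltnW.
- apply/eq_in_map => p /mem_drop_ord le; rewrite ffunE.
  have -> : (p == a) = false.
    by apply/negbTE; rewrite -(inj_eq val_inj) neq_ltn /= orbC (leq_trans _ le).
  have -> // : (p == b) = false.
  by apply/negbTE; rewrite -(inj_eq val_inj) neq_ltn /= Eb orbC (leq_trans _ le).
Qed.

End Words.

Section Mats.
Variables (C : numClosedFieldType) (n m : nat).
Notation TD := (tens_dim (Xn n) m).

Definition Dd : 'M[C]_TD := diag_mx (\row_i @Dw C n m (enum_val i)).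
Definition Di : 'M[C]_TD := diag_mx (\row_i (@Dw C n m (enum_val i))^-1).

Lemma Dw_neq0 w : @Dw C n m w != 0.
Proof. exact: DM_neq0. Qed.

Lemma DdDi : Dd *m Di = 1%:M.
Proof.
rewrite mulmx_diag; apply/matrixP => i j; rewrite !mxE.
by case: eqP => [->|]; rewrite ?mulr1n ?mulr0n ?mulfV ?Dw_neq0.
Qed.

Lemma DiDd : Di *m Dd = 1%:M.
Proof.
rewrite mulmx_diag; apply/matrixP => i j; rewrite !mxE.
by case: eqP => [->|]; rewrite ?mulr1n ?mulr0n ?mulVf ?Dw_neq0.
Qed.

Lemma conj_gen k :
  rho_gen (@rk_Xn n) (@chi C n) m k = Dd *m rho_gen (@rk_Xn n) (@minus_one C n) m k *m Di.
Proof.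
rewrite /rho_gen; case: insubP => [a _ Ea|_]; last by rewrite mulmx1 DdDi.
case: insubP => [b _ Eb|_]; last by rewrite mulmx1 DdDi.
apply/matrixP => i j; rewrite mul_mx_diag mul_diag_mx !mxE.
case: eqP => [E|_]; last by rewrite mulr0 mul0r.
rewrite E Dw_braid; last by rewrite Ea Eb.
rewrite /minus_one.
have := Dw_neq0 (enum_val i); move: (@Dw C n m (enum_val i)) => d d0.
rewrite /chi; case: ifP => _; by field.
Qed.

Lemma conj_word s :
  rho_word (@rk_Xn n) (@chi C n) m s = Dd *m rho_word (@rk_Xn n) (@minus_one C n) m s *m Di.
Proof.
elim: s => [|k s IH] /=; first by rewrite mulmx1 DdDi.
rewrite IH conj_gen !mulmxA -(mulmxA _ Di Dd) DiDd mulmx1.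
by [].
Qed.

Lemma conj_Q :
  Qm (@rk_Xn n) (@chi C n) m = Dd *m Qm (@rk_Xn n) (@minus_one C n) m *m Di.
Proof.
rewrite /Qm mulmx_sumr mulmx_suml; apply: eq_bigr => s _.
by rewrite conj_word.
Qed.

Lemma rank_conj (A : 'M[C]_TD) : \rank (Dd *m A *m Di) = \rank A.
Proof.
apply/eqP; rewrite eqn_leq; apply/andP; split.
  exact: leq_trans (mxrankM_maxl _ _) (mxrankM_maxr _ _).
rewrite {1}(_ : A = Di *m (Dd *m A *m Di) *m Dd).
  exact: leq_trans (mxrankM_maxl _ _) (mxrankM_maxr _ _).
by rewrite !mulmxA DiDd mul1mx -mulmxA DiDd mulmx1.
Qed.

End Mats.

Theorem theorem3p8 (C : numClosedFieldType) (n : nat) (hn : (4 <= n)%N) :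
  is_cocycle (@rk_Xn n) (@chi C n) /\
  twist_equiv (@rk_Xn n) (@minus_one C n) (@chi C n) /\
  (forall m : nat,
     nichols_dim (@rk_Xn n) (@minus_one C n) m = nichols_dim (@rk_Xn n) (@chi C n) m).
Proof.
split; first by split; [move=> x y; exact: chi_neq0 | move=> x y z; exact: chi_cocycle].
split.
  exists (fun x y => (Dl C [:: x; y])^-1); split.
    by move=> x y; rewrite invr_eq0 DM_neq0.
  move=> x y; rewrite /twist /minus_one invrK.
  have := Dl_braid C [::] [::] x y; rewrite /= => ->.
  have := DM_neq0 (Wl C [:: x; y]); rewrite -/(Dl C [:: x; y]).
  move: (Dl C [:: x; y]) => d d0.
  by field.
move=> m; rewrite /nichols_dim (conj_Q C n m); case: ifP => // _.
by rewrite !mxrank_ker rank_conj.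
Qed.
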